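(* Let $\mathcal{A}$ be a central and essential arrangement in $\mathbb{Q}^l$ as in the context, with $\lcm$-period $\rho_0$, and let $p$ be a prime. Then $p$ is coprime to $\rho_0$ if and only if $\mathcal{A}$ and $\mathcal{A}_p$ are combinatorially equivalent.
   Context: $\mathcal{A}=\{H_1,\dots,H_n\}$: $n$ distinct linear hyperplanes in $\mathbb{Q}^l$ with $\bigcap H_i=\{0\}$, $H_i=\{\alpha_i=0\}$, $\alpha_i=\sum_{k=1}^lc_{ki}x_k$ with $c_{ki}\in\mathbb{Z}$ not all divisible by any prime. $\mathcal{A}_p$ is the indexed family of the $n$ hyperplanes $(H_i)_p=\{(\alpha_i)_p=0\}$ in $\mathbb{F}_p^l$, where $(\alpha_i)_p$ is the reduction of $\alpha_i$ mod $p$. Let $C=(c_{ki})\in\mathrm{Mat}_{l\times n}(\mathbb{Z})$ with columns $c_1,\dots,c_n$; for nonempty $J=\{i_1<\dots<i_k\}\subseteq[n]$, $C_J=(c_{i_1},\dots,c_{i_k})$, with Smith normal form having nonzero diagonal entries $e_{J,1}\mid\dots\mid e_{J,r}$ (positive), $r=\mathrm{rk}(C_J)$; $e(J)=e_{J,r}$ and $\rho_0=\lcm\{e(J): J\subseteq[n],\ 1\le|J|\le l\}$. Two indexed families $\{H^{(1)}_i\}_{i=1}^n$ in $K_1^l$ and $\{H^{(2)}_i\}_{i=1}^n$ in $K_2^l$ are combinatorially equivalent if $\dim(H^{(1)}_{i_1}\cap\dots\cap H^{(1)}_{i_k})=\dim(H^{(2)}_{i_1}\cap\dots\cap H^{(2)}_{i_k})$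 for all $1\le i_1<\dots<i_k\le n$ (dimension of $\emptyset$ is $-1$). *)

(* Defs.v *)
From HB Require Import structures.
From mathcomp Require Import all_boot all_order all_algebra.
Set Implicit Arguments. Unset Strict Implicit. Unset Printing Implicit Defensive.
Import Order.TTheory GRing.Theory Num.Theory.
Local Open Scope ring_scope.

(* Integer matrix C : 'M[int]_(l, n); column i holds the coefficients c_{ki}
   of alpha_i = sum_k c_{ki} x_k.  A point x of K^l is a row vector, and
   alpha_i(x) = x *m col i C. *)

(* Reduction of C into a ring K (K = rat for A, K = 'F_p for A_p). *)
Definition mx_in (K : nzRingType) l n (C : 'M[int]_(l, n)) : 'M[K]_(l, n) :=
  map_mx (fun z : int => z%:~R) C.

Definition hyperplane (K : fieldType) l n (C : 'M[int]_(l, n)) (i : 'I_n)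
  : 'M[K]_l := kermx (col i (mx_in K C)).

Definition dim_int (K : fieldType) l n (C : 'M[int]_(l, n)) (J : {set 'I_n})
  : nat := \rank (\bigcap_(i in J) hyperplane K C i)%MS.

Definition comb_equiv (K1 K2 : fieldType) l n (C : 'M[int]_(l, n)) : Prop :=
  forall J : {set 'I_n}, J != set0 -> dim_int K1 C J = dim_int K2 C J.

Definition subcols l n (C : 'M[int]_(l, n)) (J : {set 'I_n})
  : 'M[int]_(l, #|J|) := colsub (fun j : 'I_#|J| => enum_val j) C.

Definition snf_diag m k (A : 'M[int]_(m, k)) : seq int :=
  s2val (projT3 (projT3 (int_Smith_normal_form A))).

(* e(J): the last nonzero (positive) invariant factor e_{J,r}, r = rk C_J. *)
Definition eJ l n (C : 'M[int]_(l, n)) (J : {set 'I_n}) : nat :=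
  absz ((snf_diag (subcols C J))`_(\rank (mx_in rat (subcols C J))).-1).

Definition rho0 l n (C : 'M[int]_(l, n)) : nat :=
  \big[lcmn/1%N]_(J : {set 'I_n} | (0 < #|J| <= l)%N) eJ C J.

(* Main.v *)
Require Import Defs.
From HB Require Import structures.
From mathcomp Require Import all_boot all_order all_algebra.
Set Implicit Arguments. Unset Strict Implicit. Unset Printing Implicit Defensive.
Import Order.TTheory GRing.Theory Num.Theory.
Local Open Scope ring_scope.
From mathcomp Require Import zify.

Lemma rank_left_unit (F : fieldType) m n (L : 'M[F]_m) (X : 'M_(m, n)) :
  L \in unitmx -> \rank (L *m X) = \rank X.
Proof.
move=> uL; rewrite -mxrank_tr trmx_mul mxrankMfree ?mxrank_tr //.
by rewrite row_free_unit unitmx_tr.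
Qed.

Lemma map_unit_int (K : fieldType) m (L : 'M[int]_m) :
  L \in unitmx -> map_mx (fun z : int => z%:~R : K) L \in unitmx.
Proof.
rewrite !unitmxE => uL.
have -> : (fun z : int => z%:~R : K) = intr by [].
by rewrite det_map_mx rmorph_unit.
Qed.

Lemma dvdz_intr0 (K : fieldType) (a b : int) :
  (a %| b)%Z -> a%:~R == 0 :> K -> b%:~R == 0 :> K.
Proof. by case/dvdzP=> q -> /eqP a0; rewrite intrM a0 mulr0. Qed.

Lemma find_prop (K : fieldType) (d : seq int) i : sorted dvdz d ->
  (find (fun z : int => z%:~R == 0%R :> K) d <= i)%N ->
  (d`_i)%:~R == 0 :> K.
Proof.
move=> sd fi; set P := (fun z : int => z%:~R == 0 :> K) in fi *.
have [ilt|ige] := ltnP i (size d); last by rewrite nth_default.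
have hasP : has P d by rewrite has_find; apply: leq_ltn_trans ilt.
apply: (@dvdz_intr0 K d`_(find P d)); last exact: (nth_find 0 hasP).
apply: (sorted_leq_nth (@dvdz_trans) (@dvdzz)) => //.
by rewrite inE -has_find.
Qed.

Lemma rank_snf (K : fieldType) m k (A : 'M[int]_(m, k)) (L : 'M[int]_m)
  (R : 'M[int]_k) (d : seq int) :
  L \in unitmx -> R \in unitmx -> sorted dvdz d ->
  A = L *m (\matrix_(i, j) (d`_i *+ (i == j :> nat))) *m R ->
  \rank (map_mx (fun z : int => z%:~R : K) A) =
    minn (minn m k) (find (fun z : int => z%:~R == 0 :> K) d).
Proof.
move=> uL uR sd ->.
have -> : (fun z : int => z%:~R : K) = intr by [].
rewrite !map_mxM mxrankMfree ?row_free_unit ?map_unit_int //.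
rewrite rank_left_unit ?map_unit_int //.
set t := minn (minn m k) _.
pose e : 'rV[K]_k := \row_j (if (j < t)%N then (d`_j)%:~R else 1).
have -> : map_mx intr (\matrix_(i, j) (d`_i *+ (i == j :> nat))) =
          pid_mx t *m diag_mx e :> 'M[K]_(m, k).
  apply/matrixP=> i j; rewrite mul_mx_diag !mxE.
  case: eqP => [ij|_]; last by rewrite mulr0n rmorph0 mul0r.
  rewrite mulr1n /= ij.
  case: ifP => jt; first by rewrite mul1r.
  rewrite mul0r; apply/eqP; apply: find_prop => //.
  move: jt; rewrite /t !ltn_min -ij ltn_ord /= ij ltn_ord /= => /negbT.
  by rewrite -leqNgt.
have tm : (t <= m)%N by rewrite /t !geq_min leqnn.
have tk : (t <= k)%N by rewrite /t !geq_min leqnn orbT.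
rewrite mxrankMfree ?rank_pid_mx //.
rewrite row_free_unit unitmxE det_diag unitfE; apply/prodf_neq0 => j _.
rewrite !mxE; case: ifP => // jt; last exact: oner_neq0.
apply: contraTneq jt => /eqP d0; rewrite -leqNgt.
rewrite geq_min; apply/orP; right.
rewrite leqNgt; apply/negP => /(before_find 0); rewrite d0.
by [].
Qed.
Lemma mul_col (F : fieldType) a b c (X : 'M[F]_(a, b)) (M : 'M[F]_(b, c)) j :
  X *m col j M = col j (X *m M).
Proof.
by apply/matrixP => x y; rewrite !mxE; apply: eq_bigr => k _; rewrite !mxE.
Qed.

Lemma mx_in_subcols (K : fieldType) l n (C : 'M[int]_(l, n)) (J : {set 'I_n}) :
  mx_in K (subcols C J) = colsub (fun j : 'I_#|J| => enum_val j) (mx_in K C).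
Proof. by apply/matrixP => x y; rewrite !mxE. Qed.

Lemma dim_rank (K : fieldType) l n (C : 'M[int]_(l, n)) (J : {set 'I_n}) :
  dim_int K C J = (l - \rank (mx_in K (subcols C J)))%N.
Proof.
rewrite /dim_int -mxrank_ker; apply/eqmx_rank/andP; split.
  apply/sub_kermxP; rewrite mx_in_subcols mulmx_colsub.
  apply/matrixP => x y; rewrite [LHS]mxE [RHS]mxE.
  have : ((\bigcap_(i in J) hyperplane K C i) <= hyperplane K C (enum_val y))%MS.
    by apply: bigcapmx_inf (enum_valP y) _.
  move/sub_kermxP => /matrixP /(_ x 0); rewrite mul_col [LHS]mxE [RHS]mxE.
  by [].
apply/sub_bigcapmxP => i iJ; apply/sub_kermxP.
have -> : col i (mx_in K C) = col (enum_rank_in iJ i) (mx_in K (subcols C J)).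
  by rewrite mx_in_subcols col_colsub enum_rankK_in.
by rewrite mul_col mulmx_ker; apply/matrixP => x y; rewrite !mxE.
Qed.
Definition XJ (K : fieldType) l n (C : 'M[int]_(l, n)) (J : {set 'I_n}) :=
  (\bigcap_(i in J) hyperplane K C i)%MS.

Lemma XJ_mono (K : fieldType) l n (C : 'M[int]_(l, n)) (J1 J2 : {set 'I_n}) :
  J1 \subset J2 -> (XJ K C J2 <= XJ K C J1)%MS.
Proof.
move=> s; apply/sub_bigcapmxP => i i1.
rewrite /XJ; exact: (bigcapmx_inf i (subsetP s i i1) (submx_refl _)).
Qed.

Lemma greedy (K : fieldType) l n (C : 'M[int]_(l, n)) (J : {set 'I_n}) :
  exists2 J' : {set 'I_n}, J' \subset J &
    ((XJ K C J' <= XJ K C J)%MS /\ (#|J'| + dim_int K C J' <= l)%N).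
Proof.
elim: {J}_.+1 {-2}J (ltnSn #|J|) => // N IH J cardJ.
have [->|[i iJ]] := set_0Vmem J.
  exists set0; first exact: sub0set.
  by rewrite cards0 add0n submx_refl /dim_int rank_leq_row.
have cJ0 : (#|J :\ i| < N)%N.
  by move: cardJ; rewrite (cardsD1 i J) iJ.
have [J0 sJ0 [X0 c0]] := IH _ cJ0.
have sJ0J : J0 \subset J by apply: subset_trans sJ0 (subD1set J i).
have XJ0 : forall j, j \in J -> j != i -> (XJ K C J0 <= hyperplane K C j)%MS.
  move=> j jJ ji; apply: submx_trans X0 _.
  rewrite /XJ; apply: (bigcapmx_inf j); [by rewrite in_setD1 ji jJ | exact: submx_refl].
have [Hi|Hi] := boolP (XJ K C J0 <= hyperplane K C i)%MS.
  exists J0 => //; split=> //.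
  apply/sub_bigcapmxP => j jJ; have [->//|ji] := eqVneq j i.
  exact: XJ0.
have iJ0 : i \notin J0 by apply/negP => /(subsetP sJ0); rewrite !inE eqxx.
have s1 : (XJ K C (i |: J0) <= XJ K C J0)%MS by apply: XJ_mono; apply: subsetUr.
have s2 : (XJ K C (i |: J0) <= hyperplane K C i)%MS.
  by rewrite /XJ; apply: (bigcapmx_inf i); [rewrite !inE eqxx | exact: submx_refl].
exists (i |: J0).
  by rewrite subUset sub1set iJ sJ0J.
split.
  apply/sub_bigcapmxP => j jJ; have [->//|ji] := eqVneq j i.
  exact: submx_trans s1 (XJ0 j jJ ji).
have [le eq] := mxrank_leqif_sup s1.
have lt : (\rank (XJ K C (i |: J0)) < \rank (XJ K C J0))%N.
  rewrite ltn_neqAle le andbT eq; apply: contra Hi => h.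
  exact: submx_trans h s2.
rewrite cardsU1 iJ0 add1n; apply: leq_trans c0.
by rewrite addSn -addnS leq_add2l.
Qed.

Lemma Fp_intr_eq0 p (z : int) : prime p ->
  ((z%:~R : 'F_p) == 0) = (p %| `|z|)%N.
Proof.
move=> pp; rewrite (dvdn_pcharf (pchar_Fp pp)).
case: z => n; first by [].
by rewrite NegzE mulrNz oppr_eq0.
Qed.

Lemma find_mono (P1 P2 : pred int) s :
  (forall x, P1 x -> P2 x) -> (find P2 s <= find P1 s)%N.
Proof.
move=> H; rewrite leqNgt; apply/negP => lt.
have h1 : has P1 s by rewrite has_find (leq_trans lt (find_size _ _)).
by have := before_find 0 lt; rewrite (H _ (nth_find 0 h1)).
Qed.

Lemma snf_spec l n (C : 'M[int]_(l, n)) (J : {set 'I_n}) :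
  sorted dvdz (snf_diag (subcols C J)) /\
  forall K : fieldType, \rank (mx_in K (subcols C J)) =
    minn (minn l #|J|) (find (fun z : int => z%:~R == 0%R :> K) (snf_diag (subcols C J))).
Proof.
rewrite /snf_diag /mx_in.
case: (int_Smith_normal_form (subcols C J)) => L uL [R uR [d sd E]] /=.
split=> // K; exact: (rank_snf K uL uR sd E).
Qed.

Lemma rank_le (K : fieldType) l n (C : 'M[int]_(l, n)) (J : {set 'I_n}) :
  (\rank (mx_in K (subcols C J)) <= \rank (mx_in rat (subcols C J)))%N.
Proof.
have [_ E] := snf_spec C J; rewrite !E.
have : (find (fun z : int => z%:~R == 0%R :> K) (snf_diag (subcols C J)) <=
        find (fun z : int => z%:~R == 0%R :> rat) (snf_diag (subcols C J)))%N.
  by apply: find_mono => x; rewrite intr_eq0 => /eqP ->; rewrite rmorph0.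
by move=> h; rewrite leq_min geq_minl /=; apply: leq_trans (geq_minr _ _) h.
Qed.

Lemma perJ l n (C : 'M[int]_(l, n)) (J : {set 'I_n}) p : prime p ->
  (0 < \rank (mx_in rat (subcols C J)))%N ->
  (\rank (mx_in [the fieldType of 'F_p] (subcols C J)) ==
   \rank (mx_in rat (subcols C J))) = ~~ (p %| eJ C J)%N.
Proof.
move=> pp rpos; rewrite /eJ.
have [sd E] := snf_spec C J.
set d := snf_diag (subcols C J) in sd E *.
set rQ := \rank (mx_in rat (subcols C J)) in rpos *.
have rQE := E rat; rewrite -/rQ in rQE.
have rPE := E [the fieldType of 'F_p].
set fP := find _ d in rPE; set fQ := find _ d in rQE.
have fPQ : (fP <= fQ)%N.
  by apply: find_mono => x; rewrite intr_eq0 => /eqP ->; rewrite rmorph0.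
have fQs : (fQ <= size d)%N by apply: find_size.
have EfP : find (fun z : int => z%:~R == 0%R :> 'F_p) d = fP by [].
clearbody fP fQ rQ.
apply/idP/idP.
  move/eqP => eqr.
  have lt : (rQ.-1 < fP)%N.
  rewrite eqr in rPE; lia.
  rewrite -EfP in lt.
  by have := before_find 0 lt; rewrite Fp_intr_eq0 // => ->.
move=> ndv; apply/eqP.
suff : (rQ <= fP)%N by lia.
rewrite leqNgt; apply/negP => lt.
have hP : has (fun z : int => z%:~R == 0%R :> 'F_p) d.
  by rewrite has_find; lia.
have := nth_find 0 hP; rewrite EfP Fp_intr_eq0 // => pd.
have dd : (d`_fP %| d`_rQ.-1)%Z.
  apply: (sorted_leq_nth (@dvdz_trans) (@dvdzz)) => //; rewrite ?inE; lia.
move: dd; rewrite dvdzE => dd.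
by move: ndv; rewrite (dvdn_trans pd dd).
Qed.

Lemma dim_le (K : fieldType) l n (C : 'M[int]_(l, n)) (J : {set 'I_n}) :
  (dim_int rat C J <= dim_int K C J)%N.
Proof. by rewrite !dim_rank leq_sub2l // rank_le. Qed.

Lemma dim_mono (K : fieldType) l n (C : 'M[int]_(l, n)) (J1 J2 : {set 'I_n}) :
  J1 \subset J2 -> (dim_int K C J2 <= dim_int K C J1)%N.
Proof. by move=> s; apply: mxrankS; apply: XJ_mono. Qed.

Lemma dim_set0 (K : fieldType) l n (C : 'M[int]_(l, n)) :
  dim_int K C set0 = l.
Proof.
rewrite dim_rank.
have h := rank_leq_col (mx_in K (subcols C set0)).
have -> : \rank (mx_in K (subcols C set0)) = 0%N.
  by apply/eqP; rewrite -leqn0; apply: leq_trans h _; rewrite cards0.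
by rewrite subn0.
Qed.

Theorem corollary7p9 (l n : nat) (C : 'M[int]_(l, n)) (p : nat)
  (Hprim : forall (i : 'I_n) (q : nat), prime q ->
             exists k : 'I_l, ~~ (q%:Z %| C k i)%Z)
  (Hdistinct : forall i j : 'I_n, i != j ->
             ~~ (hyperplane rat C i == hyperplane rat C j)%MS)
  (Hessential : (\bigcap_(i < n) hyperplane rat C i == (0 : 'M[rat]_l))%MS)
  (Hp : prime p) :
  coprime p (rho0 C) <-> comb_equiv rat [the fieldType of 'F_p] C.
Proof.
have rl : forall (K : fieldType) (J : {set 'I_n}),
    (\rank (mx_in K (subcols C J)) <= l)%N by move=> K J; apply: rank_leq_row.
split.
  move=> cop.
  have small : forall J1 : {set 'I_n}, (#|J1| <= l)%N ->
      dim_int rat C J1 = dim_int [the fieldType of 'F_p] C J1.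
    move=> J1 cJ1.
    have [->|nz] := eqVneq J1 set0; first by rewrite !dim_set0.
    have ediv : (eJ C J1 %| rho0 C)%N.
      rewrite /rho0 (bigD1 J1) /=; first exact: dvdn_lcml.
      by rewrite card_gt0 nz cJ1.
    have cope : coprime p (eJ C J1) by apply: coprime_dvdr ediv cop.
    rewrite !dim_rank; congr (_ - _)%N; apply/esym/eqP.
    have := rank_le [the fieldType of 'F_p] C J1.
    have [r0|rpos] := posnP (\rank (mx_in rat (subcols C J1))).
      by rewrite r0 leqn0.
    by rewrite perJ // -prime_coprime.
  move=> J Jnz.
  have [J' sJ' [XJ' cJ']] := greedy rat C J.
  have e' := small J' (leq_trans (leq_addr _ _) cJ').
  have h1 := dim_le [the fieldType of 'F_p] C J.
  have h2 := dim_mono [the fieldType of 'F_p] C sJ'.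
  have h3 : (dim_int rat C J' <= dim_int rat C J)%N by apply: mxrankS.
  lia.
move=> ce.
rewrite /rho0; apply: (big_ind (coprime p)); first exact: coprimen1.
  move=> a b ca cb; apply: (@coprime_dvdr _ (a * b)).
    by rewrite dvdn_lcm dvdn_mulr ?dvdn_mull.
  by rewrite coprimeMr ca cb.
move=> J /andP [J0 Jl].
have Jnz : J != set0 by rewrite -card_gt0.
have rpos : (0 < \rank (mx_in rat (subcols C J)))%N.
  rewrite lt0n mxrank_eq0; apply/negP => /eqP M0.
  have [i iJ] := set0Pn _ Jnz.
  have [k nd] := Hprim i p Hp.
  move/matrixP: M0 => /(_ k (enum_rank_in iJ i)).
  rewrite !mxE enum_rankK_in // => /eqP; rewrite intr_eq0 => /eqP ck.
  by move: nd; rewrite ck dvdz0.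
rewrite prime_coprime // -perJ //.
have := ce J Jnz; rewrite !dim_rank => h.
have := rl rat J; have := rl [the fieldType of 'F_p] J.
move=> a b; apply/eqP; by rewrite -(subKn a) -h subKn.
Qed.
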